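(* Let $K$ be a positive integer and let $d,e$ be integers. Then, for each choice of sign (with $\pm$ and $\mp$ correlated throughout), \[ f_{1,2K+1,1}(q^{d},q^{e},q)\pm q^{\frac{K+d+e}{2}}f_{1,2K+1,1}(q^{1+K+d},q^{1+K+e},q) =f_{K+1,K+1,1}\big(\mp q^{(K+d+e)/2},q^{d},q\big) \mp q^{(K+2-d-e)/2}f_{K+1,K+1,1}\big(\mp q^{2+(3K-d-e)/2},q^{K+2-e},q\big). \]
   Context: Let $q=e^{2\pi i\tau}$ with $\operatorname{Im}\tau>0$, and for real $\alpha$ put $q^{\alpha}:=e^{2\pi i\alpha\tau}$. For positive integers $a,b,c$ and $x,y\in\mathbb{C}^*$, the Hecke-type double-sum is $f_{a,b,c}(x,y,q):=\Big(\sum_{r,s\ge0}-\sum_{r,s<0}\Big)(-1)^{r+s}x^ry^sq^{a\binom{r}{2}+brs+c\binom{s}{2}}$. *)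

(* Defs.v *)
From Stdlib Require Import Reals ZArith.
From Coquelicot Require Import Coquelicot.
Open Scope R_scope.

(* q^alpha := e^{2 pi i alpha tau}, written out via real exp/cos/sin. *)
Definition qpow (tau : C) (alpha : R) : C :=
  (exp (- 2 * PI * alpha * Im tau) * cos (2 * PI * alpha * Re tau),
   exp (- 2 * PI * alpha * Im tau) * sin (2 * PI * alpha * Re tau)).

Fixpoint Cpown (x : C) (n : nat) : C :=
  match n with O => RtoC 1 | S m => Cmult x (Cpown x m) end.

Definition Cpowz (x : C) (z : Z) : C :=
  if (0 <=? z)%Z then Cpown x (Z.to_nat z) else Cinv (Cpown x (Z.to_nat (- z))).

Fixpoint Csum (n : nat) (u : nat -> C) : C :=
  match n with O => RtoC 0 | S m => Cplus (Csum m u) (u m) end.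

Definition hecke_term (a b c : Z) (x y tau : C) (r s : Z) : C :=
  Cmult (Cmult (Cmult (Cpowz (RtoC (-1)) (r + s)) (Cpowz x r)) (Cpowz y s))
        (qpow tau (IZR (a * (r * (r - 1) / 2) + b * r * s + c * (s * (s - 1) / 2)))).

(* square partial sums: sum over 0<=r,s<N  minus sum over -N<=r,s<0 *)
Definition hecke_partial (a b c : Z) (x y tau : C) (N : nat) : C :=
  Cminus
    (Csum N (fun r => Csum N (fun s => hecke_term a b c x y tau (Z.of_nat r) (Z.of_nat s))))
    (Csum N (fun r => Csum N (fun s =>
        hecke_term a b c x y tau (- Z.of_nat (S r)) (- Z.of_nat (S s))))).

(* f_{a,b,c}(x,y,q) with q = e^{2 pi i tau}: limit of the square partial sums
   (the double sums converge absolutely for a,b,c > 0, |q|<1). *)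
Definition hecke_f (a b c : Z) (x y tau : C) : C :=
  (real (Lim_seq (fun N => Re (hecke_partial a b c x y tau N))),
   real (Lim_seq (fun N => Im (hecke_partial a b c x y tau N)))).

Definition sgnC (pm : bool) : C := if pm then RtoC 1 else RtoC (-1).

(* Main.v *)
Require Import Defs.
From Stdlib Require Import Reals ZArith Lia Lra.
From Coquelicot Require Import Coquelicot.
Open Scope R_scope.

Lemma C_ext (x y : C) : fst x = fst y -> snd x = snd y -> x = y.
Proof. destruct x, y; simpl; intros; subst; reflexivity. Qed.

Lemma qpow_add tau a b : Cmult (qpow tau a) (qpow tau b) = qpow tau (a + b).
Proof.
  unfold qpow, Cmult; simpl.
  replace (- 2 * PI * (a + b) * Im tau) with ((- 2 * PI * a * Im tau) + (- 2 * PI * b * Im tau)) by ring.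
  replace (2 * PI * (a + b) * Re tau) with ((2 * PI * a * Re tau) + (2 * PI * b * Re tau)) by ring.
  rewrite exp_plus, cos_plus, sin_plus.
  apply C_ext; simpl; ring.
Qed.

Lemma qpow_0 tau : qpow tau 0 = RtoC 1.
Proof.
  unfold qpow. apply C_ext; simpl;
  replace (- 2 * PI * 0 * Im tau) with 0 by ring;
  replace (2 * PI * 0 * Re tau) with 0 by ring;
  rewrite exp_0, ?cos_0, ?sin_0; ring.
Qed.

Lemma qpow_ext tau a b : a = b -> qpow tau a = qpow tau b.
Proof. intros ->; reflexivity. Qed.

Lemma Cinv_uniq (x y : C) : Cmult x y = RtoC 1 -> Cinv x = y.
Proof.
  intros H.
  assert (Hx : x <> RtoC 0).
  { intros ->. rewrite Cmult_0_l in H. apply RtoC_inj in H. lra. }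
  rewrite <- (Cmult_1_r (Cinv x)), <- H, Cmult_assoc, Cinv_l by exact Hx.
  apply Cmult_1_l.
Qed.

Lemma Cpown_Cpow x n : Cpown x n = Cpow x n.
Proof. induction n; simpl; [reflexivity| rewrite IHn; reflexivity]. Qed.

Lemma Cpown_qpow tau a n : Cpown (qpow tau a) n = qpow tau (a * INR n).
Proof.
  induction n; simpl Cpown.
  - rewrite <- (qpow_0 tau). apply qpow_ext. simpl; ring.
  - rewrite IHn, qpow_add. apply qpow_ext. rewrite S_INR; ring.
Qed.

Lemma Cinv_qpow tau a : Cinv (qpow tau a) = qpow tau (- a).
Proof. apply Cinv_uniq. rewrite qpow_add. rewrite <- (qpow_0 tau). apply qpow_ext; ring. Qed.

Lemma Cpowz_qpow tau a z : Cpowz (qpow tau a) z = qpow tau (a * IZR z).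
Proof.
  unfold Cpowz. destruct (Z.leb_spec 0 z).
  - rewrite Cpown_qpow. apply qpow_ext. rewrite INR_IZR_INZ, Z2Nat.id by lia. reflexivity.
  - rewrite Cpown_qpow, Cinv_qpow. apply qpow_ext. rewrite INR_IZR_INZ, Z2Nat.id by lia.
    rewrite opp_IZR. ring.
Qed.

Definition sg (w : C) (z : Z) : C := if Z.even z then RtoC 1 else w.

Lemma Zeven_of_nat n : Z.even (Z.of_nat n) = Nat.even n.
Proof.
  induction n; [reflexivity|].
  rewrite Nat2Z.inj_succ, Z.even_succ, Nat.even_succ, <- Z.negb_even, <- Nat.negb_even, IHn.
  reflexivity.
Qed.

Lemma Cpown_sign w n : Cmult w w = RtoC 1 ->
  Cpown w n = if Nat.even n then RtoC 1 else w.
Proof.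
  intros Hw. induction n; simpl Cpown; [reflexivity|].
  rewrite IHn, Nat.even_succ, <- Nat.negb_even.
  destruct (Nat.even n); simpl; [apply Cmult_1_r | exact Hw].
Qed.

Lemma Cpowz_sign w z : Cmult w w = RtoC 1 -> Cpowz w z = sg w z.
Proof.
  intros Hw. unfold Cpowz, sg. destruct (Z.leb_spec 0 z).
  - rewrite Cpown_sign by exact Hw. rewrite <- Zeven_of_nat, Z2Nat.id by lia. reflexivity.
  - rewrite Cpown_sign by exact Hw. rewrite <- Zeven_of_nat, Z2Nat.id by lia.
    rewrite Z.even_opp. destruct (Z.even z).
    + apply Cinv_uniq. apply Cmult_1_l.
    + apply Cinv_uniq. exact Hw.
Qed.

Lemma Cpown_mult x y n : Cpown (Cmult x y) n = Cmult (Cpown x n) (Cpown y n).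
Proof. rewrite !Cpown_Cpow. apply Cpow_mult_l. Qed.

Lemma Cpown_nz x n : x <> RtoC 0 -> Cpown x n <> RtoC 0.
Proof. rewrite Cpown_Cpow. apply Cpow_nz. Qed.

Lemma Cpowz_mult x y z : x <> RtoC 0 -> y <> RtoC 0 ->
  Cpowz (Cmult x y) z = Cmult (Cpowz x z) (Cpowz y z).
Proof.
  intros Hx Hy. unfold Cpowz. destruct (0 <=? z)%Z.
  - apply Cpown_mult.
  - rewrite Cpown_mult. apply Cinv_uniq.
    pose proof (Cpown_nz x (Z.to_nat (- z)) Hx).
    pose proof (Cpown_nz y (Z.to_nat (- z)) Hy).
    field. split; assumption.
Qed.

Lemma qpow_nz tau a : qpow tau a <> RtoC 0.
Proof.
  intros H. assert (Cmult (qpow tau a) (qpow tau (-a)) = RtoC 1).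
  { rewrite qpow_add, <- (qpow_0 tau). apply qpow_ext; ring. }
  rewrite H, Cmult_0_l in H0. apply RtoC_inj in H0. lra.
Qed.

Lemma sign_nz w : Cmult w w = RtoC 1 -> w <> RtoC 0.
Proof. intros H ->. rewrite Cmult_0_l in H. apply RtoC_inj in H. lra. Qed.

Lemma Cpowz_wq tau w a z : Cmult w w = RtoC 1 ->
  Cpowz (Cmult w (qpow tau a)) z = Cmult (sg w z) (qpow tau (a * IZR z)).
Proof.
  intros Hw. rewrite Cpowz_mult; [| apply sign_nz; exact Hw | apply qpow_nz].
  rewrite Cpowz_sign by exact Hw. rewrite Cpowz_qpow. reflexivity.
Qed.

Lemma Cmod_qpow tau a : Cmod (qpow tau a) = exp (- 2 * PI * a * Im tau).
Proof.
  unfold Cmod, qpow; simpl.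
  set (E := exp (-2 * PI * a * Im tau)). set (t := 2 * PI * a * Re tau).
  replace (E * cos t * (E * cos t * 1) + E * sin t * (E * sin t * 1))
   with (E * E * (Rsqr (sin t) + Rsqr (cos t))) by (unfold Rsqr; ring).
  rewrite sin2_cos2, Rmult_1_r. apply sqrt_square. apply Rlt_le, exp_pos.
Qed.

Lemma Cmod_sg w z : Cmod w = 1 -> Cmod (sg w z) = 1.
Proof. intros H; unfold sg; destruct (Z.even z); [apply Cmod_1|exact H]. Qed.

Lemma Csum_ext_lt n u v : (forall i, (i < n)%nat -> u i = v i) -> Csum n u = Csum n v.
Proof.
  induction n; intros H; simpl; [reflexivity|].
  rewrite IHn by (intros; apply H; lia). rewrite H by lia. reflexivity.
Qed.

Lemma Csum_ext n u v : (forall i, u i = v i) -> Csum n u = Csum n v.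
Proof. intros; apply Csum_ext_lt; auto. Qed.

Lemma Csum_plus n u v : Csum n (fun i => Cplus (u i) (v i)) = Cplus (Csum n u) (Csum n v).
Proof. induction n; simpl; [apply C_ext; simpl; ring| rewrite IHn; ring]. Qed.

Lemma Csum_minus n u v : Csum n (fun i => Cminus (u i) (v i)) = Cminus (Csum n u) (Csum n v).
Proof. induction n; simpl; [apply C_ext; simpl; ring| rewrite IHn; ring]. Qed.

Lemma Csum_scal n c u : Csum n (fun i => Cmult c (u i)) = Cmult c (Csum n u).
Proof. induction n; simpl; [apply C_ext; simpl; ring| rewrite IHn; ring]. Qed.

Lemma Csum_split m k u : Csum (m + k) u = Cplus (Csum m u) (Csum k (fun j => u (m + j)%nat)).
Proof.
  induction k; simpl.
  - rewrite Nat.add_0_r. apply C_ext; simpl; ring.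
  - rewrite Nat.add_succ_r. simpl. rewrite IHk. ring.
Qed.

Lemma Csum_rev n u : Csum n u = Csum n (fun j => u (n - 1 - j)%nat).
Proof.
  revert u. induction n; intros u; [reflexivity|].
  transitivity (Csum (1 + n) (fun j => u (S n - 1 - j)%nat)); [|reflexivity].
  rewrite Csum_split. simpl (Csum 1 _).
  rewrite (Csum_ext_lt n (fun j : nat => u (S n - 1 - (1 + j))%nat) (fun j => u (n - 1 - j)%nat))
    by (intros; f_equal; lia).
  rewrite <- IHn. replace (S n - 1 - 0)%nat with n by lia.
  simpl Csum at 1. replace (n - 0 - 0)%nat with n by lia. ring.
Qed.

Lemma Csum_S n u : Csum (S n) u = Cplus (Csum n u) (u n).
Proof. reflexivity. Qed.

Lemma Csum_interleave m u :
  Csum (2 * m + 1) u = Cplus (Csum (m + 1) (fun i => u (2 * i)%nat)) (Csum m (fun i => u (2 * i + 1)%nat)).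
Proof.
  induction m.
  - simpl. ring.
  - replace (2 * S m + 1)%nat with (S (S (2 * m + 1))) by lia.
    replace (S m + 1)%nat with (S (m + 1)) by lia.
    rewrite !Csum_S. rewrite IHm.
    replace (2 * (m + 1))%nat with (S (2 * m + 1)) by lia.
    ring.
Qed.

Section Keys.
Variable G : Z -> C.
Variable n : nat.
Let h := fun j : nat => G (Z.of_nat j - (Z.of_nat n + 1))%Z.

Lemma Key1 : Csum (2 * n + 3) h =
  Cplus (Csum (n + 1) (fun i => G (Z.of_nat i - (Z.of_nat n + 1))%Z))
        (Csum (n + 2) (fun i => G (Z.of_nat n + 1 - Z.of_nat i)%Z)).
Proof.
  replace (2 * n + 3)%nat with ((n + 1) + (n + 2))%nat by lia.
  rewrite Csum_split. f_equal.
  rewrite Csum_rev. apply Csum_ext_lt. intros i Hi. unfold h. f_equal. lia.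
Qed.

Lemma Key2 : Csum (2 * n + 3) h =
  Cplus (Csum (n + 2) (fun i => G (2 * Z.of_nat i - (Z.of_nat n + 1))%Z))
        (Csum (n + 1) (fun i => G (2 * Z.of_nat i - Z.of_nat n)%Z)).
Proof.
  replace (2 * n + 3)%nat with (2 * (n + 1) + 1)%nat by lia.
  rewrite Csum_interleave. f_equal.
  - replace (n + 1 + 1)%nat with (n + 2)%nat by lia.
    apply Csum_ext. intros i. unfold h. f_equal. lia.
  - apply Csum_ext. intros i. unfold h. f_equal. lia.
Qed.
End Keys.

Lemma Key3 (G : Z -> C) n :
  Csum (2 * n + 3) (fun j => G (Z.of_nat j - (Z.of_nat n + 1))%Z) =
  Cplus (Csum (n + 1) (fun i => G (Z.of_nat n - 2 * Z.of_nat i)%Z))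
        (Csum (n + 2) (fun i => G (Z.of_nat n + 1 - 2 * Z.of_nat i)%Z)).
Proof.
  pose proof (Key2 (fun w => G (- w)%Z) n) as H.
  rewrite Csum_rev.
  rewrite (Csum_ext_lt _ _ (fun j => G (- (Z.of_nat j - (Z.of_nat n + 1)))%Z)) by (intros; f_equal; lia).
  rewrite H, Cplus_comm. f_equal; apply Csum_ext; intros; f_equal; lia.
Qed.

Lemma m1sq : Cmult (RtoC (-1)) (RtoC (-1)) = RtoC 1.
Proof. apply C_ext; simpl; ring. Qed.

Lemma term_form a b c w al be tau r s : Cmult w w = RtoC 1 ->
  hecke_term a b c (Cmult w (qpow tau al)) (qpow tau be) tau r s =
  Cmult (Cmult (sg (RtoC (-1)) (r + s)) (sg w r))
    (qpow tau (al * IZR r + be * IZR s +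
       IZR (a * (r * (r - 1) / 2) + b * r * s + c * (s * (s - 1) / 2)))).
Proof.
  intros Hw. unfold hecke_term.
  rewrite (Cpowz_sign (RtoC (-1))) by exact m1sq.
  rewrite Cpowz_wq by exact Hw. rewrite Cpowz_qpow.
  rewrite <- !qpow_add.
  replace (al * IZR r) with (IZR r * al) by ring.
  replace (be * IZR s) with (IZR s * be) by ring.
  ring.
Qed.

Lemma half_IZR z : IZR (z * (z - 1) / 2) = IZR z * (IZR z - 1) / 2.
Proof.
  assert (He : Z.even (z * (z - 1)) = true).
  { rewrite Z.even_mul, Z.even_sub. destruct (Z.even z); reflexivity. }
  apply Z.even_spec in He. destruct He as [m Hm]. rewrite Hm.
  rewrite Z.mul_comm, Z.div_mul by lia.
  assert (IZR (z * (z-1)) = IZR (2 * m)) by (rewrite Hm; reflexivity).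
  rewrite mult_IZR, minus_IZR, mult_IZR in H. simpl in H. lra.
Qed.

Lemma sg_eq w z1 z2 m : z1 = (z2 + 2 * m)%Z -> sg w z1 = sg w z2.
Proof. intros ->. unfold sg. rewrite Z.even_add_mul_2. reflexivity. Qed.

Lemma sg_succ w z : Cmult w w = RtoC 1 -> sg w (z + 1) = Cmult w (sg w z).
Proof.
  intros Hw. unfold sg. rewrite Z.even_add. simpl.
  destruct (Z.even z); simpl.
  - symmetry; apply Cmult_1_r.
  - symmetry; exact Hw.
Qed.

Lemma sg_0 w : sg w 0 = RtoC 1.
Proof. reflexivity. Qed.

Lemma sg_1 z : sg (RtoC 1) z = RtoC 1.
Proof. unfold sg; destruct (Z.even z); reflexivity. Qed.

Definition sgm (pm : bool) : C := Copp (sgnC pm).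

Lemma sig_sq pm : Cmult (sgm pm) (sgm pm) = RtoC 1.
Proof. unfold sgm, sgnC; destruct pm; apply C_ext; simpl; ring. Qed.

Lemma sig_mod pm : Cmod (sgm pm) = 1.
Proof.
  unfold sgm, sgnC; destruct pm.
  - replace (Copp (RtoC 1)) with (RtoC (-1)) by (apply C_ext; simpl; ring).
    rewrite Cmod_R. rewrite Rabs_left by lra. ring.
  - replace (Copp (RtoC (-1))) with (RtoC 1) by (apply C_ext; simpl; ring).
    apply Cmod_1.
Qed.

Lemma sgnC_sig pm : sgnC pm = Cmult (RtoC (-1)) (sgm pm).
Proof. unfold sgm, sgnC; destruct pm; apply C_ext; simpl; ring. Qed.

Lemma one_sq : Cmult (RtoC 1) (RtoC 1) = RtoC 1.
Proof. apply Cmult_1_l. Qed.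

Definition Eg (K : nat) (d e : Z) (U W : Z) : R :=
  (INR K + 1) * IZR U * IZR U / 2 - INR K * IZR W * IZR W / 2
  + (IZR d + IZR e - 1) * IZR U / 2 + (IZR d - IZR e) * IZR W / 2.

Definition gf tau pm K d e (U W : Z) : C :=
  Cmult (Cmult (sg (RtoC (-1)) U) (sg (sgm pm) (U - W))) (qpow tau (Eg K d e U W)).

Ltac expo := unfold Eg; rewrite ?plus_IZR, ?minus_IZR, ?opp_IZR, ?mult_IZR, ?half_IZR, ?plus_IZR, ?minus_IZR, ?opp_IZR, ?mult_IZR;
  rewrite <- ?INR_IZR_INZ; simpl IZR; field.

Lemma T1 tau pm K d e r s :
  hecke_term 1 (2 * Z.of_nat K + 1) 1 (qpow tau (IZR d)) (qpow tau (IZR e)) tau r s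
  = gf tau pm K d e (r + s) (r - s).
Proof.
  rewrite <- (Cmult_1_l (qpow tau (IZR d))).
  rewrite term_form by exact one_sq. unfold gf.
  rewrite sg_1. rewrite (sg_eq _ (r + s - (r - s))%Z 0%Z s) by ring. rewrite sg_0.
  f_equal. apply qpow_ext. expo.
Qed.

Lemma T2 tau pm K d e r s :
  Cmult (Cmult (sgnC pm) (qpow tau ((INR K + IZR d + IZR e) / 2)))
   (hecke_term 1 (2 * Z.of_nat K + 1) 1 (qpow tau (1 + INR K + IZR d))
      (qpow tau (1 + INR K + IZR e)) tau r s)
  = gf tau pm K d e (r + s + 1) (r - s).
Proof.
  rewrite <- (Cmult_1_l (qpow tau (1 + INR K + IZR d))).
  rewrite term_form by exact one_sq. unfold gf.
  rewrite sg_1. rewrite sg_succ by exact m1sq.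
  rewrite (sg_eq _ (r + s + 1 - (r - s))%Z (0 + 1)%Z s) by ring.
  rewrite sg_succ by apply sig_sq. rewrite sg_0, sgnC_sig.
  rewrite (qpow_ext tau (Eg K d e (r + s + 1) (r - s))
    ((INR K + IZR d + IZR e) / 2 + ((1 + INR K + IZR d) * IZR r + (1 + INR K + IZR e) * IZR s +
     IZR (1 * (r * (r - 1) / 2) + (2 * Z.of_nat K + 1) * r * s + 1 * (s * (s - 1) / 2))))) by expo.
  rewrite <- (qpow_add tau ((INR K + IZR d + IZR e) / 2)). ring.
Qed.

Lemma T3 tau pm K d e u v :
  hecke_term (Z.of_nat K + 1) (Z.of_nat K + 1) 1
    (Cmult (Copp (sgnC pm)) (qpow tau ((INR K + IZR d + IZR e) / 2)))
    (qpow tau (IZR d)) tau u v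
  = gf tau pm K d e (u + v) v.
Proof.
  fold (sgm pm). rewrite term_form by apply sig_sq. unfold gf.
  replace (u + v - v)%Z with u by ring.
  f_equal. apply qpow_ext. expo.
Qed.

Lemma T4 tau pm K d e u v :
  Cmult (Cmult (sgnC pm) (qpow tau ((INR K + 2 - IZR d - IZR e) / 2)))
  (hecke_term (Z.of_nat K + 1) (Z.of_nat K + 1) 1
    (Cmult (Copp (sgnC pm)) (qpow tau (2 + (3 * INR K - IZR d - IZR e) / 2)))
    (qpow tau (INR K + 2 - IZR e)) tau u v)
  = gf tau pm K d e (- (u + v) - 1) v.
Proof.
  fold (sgm pm). rewrite term_form by apply sig_sq. unfold gf.
  rewrite (sg_eq _ (- (u + v) - 1)%Z ((u + v) + 1)%Z (- (u + v) - 1)%Z) by ring.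
  rewrite sg_succ by exact m1sq.
  rewrite (sg_eq _ (- (u + v) - 1 - v)%Z (u + 1)%Z (- u - v - 1)%Z) by ring.
  rewrite sg_succ by apply sig_sq. rewrite sgnC_sig.
  rewrite (qpow_ext tau (Eg K d e (- (u + v) - 1) v)
    ((INR K + 2 - IZR d - IZR e) / 2 + ((2 + (3 * INR K - IZR d - IZR e) / 2) * IZR u + (INR K + 2 - IZR e) * IZR v +
     IZR ((Z.of_nat K + 1) * (u * (u - 1) / 2) + (Z.of_nat K + 1) * u * v + 1 * (v * (v - 1) / 2))))) by expo.
  rewrite <- (qpow_add tau ((INR K + 2 - IZR d - IZR e) / 2)). ring.
Qed.

Definition Dp (T : Z -> Z -> C) (n : nat) : C :=
  Csum (S n) (fun i => T (Z.of_nat i) (Z.of_nat (n - i))).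
Definition Dn (T : Z -> Z -> C) (n : nat) : C :=
  Csum (S n) (fun i => T (- Z.of_nat (S i))%Z (- Z.of_nat (S (n - i)))%Z).

Section Shells.
Variables (tau : C) (pm : bool) (K : nat) (d e : Z).
Let k := Z.of_nat K.
Let kr := INR K.
Let t1 := hecke_term 1 (2 * k + 1) 1 (qpow tau (IZR d)) (qpow tau (IZR e)) tau.
Let t2 := hecke_term 1 (2 * k + 1) 1 (qpow tau (1 + kr + IZR d)) (qpow tau (1 + kr + IZR e)) tau.
Let t3 := hecke_term (k + 1) (k + 1) 1
            (Cmult (Copp (sgnC pm)) (qpow tau ((kr + IZR d + IZR e) / 2))) (qpow tau (IZR d)) tau.
Let t4 := hecke_term (k + 1) (k + 1) 1
            (Cmult (Copp (sgnC pm)) (qpow tau (2 + (3 * kr - IZR d - IZR e) / 2)))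
            (qpow tau (kr + 2 - IZR e)) tau.
Let c1 := Cmult (sgnC pm) (qpow tau ((kr + IZR d + IZR e) / 2)).
Let c2 := Cmult (sgnC pm) (qpow tau ((kr + 2 - IZR d - IZR e) / 2)).
Let g := gf tau pm K d e.

Lemma ShellP n : Cplus (Dp t1 (S n)) (Cmult c1 (Dp t2 n)) = Cplus (Dp t3 (S n)) (Cmult c2 (Dn t4 n)).
Proof.
  set (G := fun w => g (Z.of_nat n + 1)%Z w).
  unfold Dp, Dn. rewrite <- !Csum_scal.
  transitivity (Cplus (Csum (n + 2) (fun i => G (2 * Z.of_nat i - (Z.of_nat n + 1))%Z))
        (Csum (n + 1) (fun i => G (2 * Z.of_nat i - Z.of_nat n)%Z))).
  - replace (S (S n)) with (n + 2)%nat by lia. replace (S n) with (n + 1)%nat by lia.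
    f_equal; apply Csum_ext_lt; intros i Hi.
    + unfold t1, G, g, k. rewrite (T1 tau pm). f_equal; lia.
    + unfold t2, c1, G, g, kr, k. rewrite T2. f_equal; lia.
  - rewrite <- Key2, Key1, Cplus_comm.
    replace (S (S n)) with (n + 2)%nat by lia. replace (S n) with (n + 1)%nat by lia.
    f_equal; apply Csum_ext_lt; intros i Hi.
    + unfold t3, G, g, kr, k. rewrite T3. f_equal; lia.
    + unfold t4, c2, G, g, kr, k. rewrite T4. f_equal; lia.
Qed.

Lemma ShellP0 : Dp t1 0 = Dp t3 0.
Proof.
  unfold Dp. simpl Csum. unfold t1, t3, kr, k, g. rewrite (T1 tau pm), T3. reflexivity.
Qed.

Lemma ShellN n : Cplus (Dn t1 n) (Cmult c1 (Dn t2 (S n))) = Cplus (Dn t3 n) (Cmult c2 (Dp t4 (S n))).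
Proof.
  set (G := fun w => g (- (Z.of_nat n + 2))%Z w).
  unfold Dp, Dn. rewrite <- !Csum_scal.
  transitivity (Cplus (Csum (n + 1) (fun i => G (Z.of_nat n - 2 * Z.of_nat i)%Z))
        (Csum (n + 2) (fun i => G (Z.of_nat n + 1 - 2 * Z.of_nat i)%Z))).
  - replace (S (S n)) with (n + 2)%nat by lia. replace (S n) with (n + 1)%nat by lia.
    f_equal; apply Csum_ext_lt; intros i Hi.
    + unfold t1, G, g, k. rewrite (T1 tau pm). f_equal; lia.
    + unfold t2, c1, G, g, kr, k. rewrite T2. f_equal; lia.
  - rewrite <- Key3, Key1.
    replace (S (S n)) with (n + 2)%nat by lia. replace (S n) with (n + 1)%nat by lia.
    f_equal; apply Csum_ext_lt; intros i Hi.
    + unfold t3, G, g, kr, k. rewrite T3. f_equal; lia.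
    + unfold t4, c2, G, g, kr, k. rewrite T4. f_equal; lia.
Qed.

Lemma ShellN0 : Cmult c1 (Dn t2 0) = Cmult c2 (Dp t4 0).
Proof.
  unfold Dp, Dn. simpl Csum. rewrite !Cplus_0_l.
  unfold t2, t4, c1, c2, kr, k. rewrite T2, T4. f_equal; lia.
Qed.
End Shells.

Definition cvC (u : nat -> C) (l : C) :=
  forall eps, 0 < eps -> exists N, forall n, (N <= n)%nat -> Cmod (Cminus (u n) l) < eps.

Lemma sum_n_Csum (a : nat -> C) n : sum_n a n = Csum (S n) a.
Proof.
  induction n.
  - rewrite sum_O. simpl. rewrite Cplus_0_l. reflexivity.
  - rewrite sum_Sn, IHn. reflexivity.
Qed.

Lemma is_series_cvC (a : nat -> C) l : is_series a l -> cvC (fun n => Csum n a) l.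
Proof.
  intros H eps Heps.
  unfold is_series in H.
  destruct (proj1 (filterlim_locally (sum_n a) l) H (mkposreal (eps / 2) ltac:(lra))) as [N HN]. exists (S N). intros n Hn.
  destruct n as [|n]; [lia|].
  specialize (HN n ltac:(lia)). rewrite sum_n_Csum in HN.
  destruct HN as [H1 H2]. simpl in H1, H2.
  assert (R1 : Rabs (fst (Csum (S n) a - l)%C) < eps / 2).
  { revert H1. unfold ball; simpl. unfold AbsRing_ball, abs, minus, plus, opp; simpl. intros H1. 
    replace (fst (Csum n a) + fst (a n) + - fst l) with (fst (Csum n a) + fst (a n) - fst l) in H1 by ring. exact H1. }
  assert (R2 : Rabs (snd (Csum (S n) a - l)%C) < eps / 2).
  { revert H2. unfold ball; simpl. unfold AbsRing_ball, abs, minus, plus, opp; simpl. intros H2.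
    replace (snd (Csum n a) + snd (a n) + - snd l) with (snd (Csum n a) + snd (a n) - snd l) in H2 by ring. exact H2. }
  assert (Hs : sqrt 2 < 2).
  { rewrite <- (sqrt_square 2) at 2 by lra. apply sqrt_lt_1_alt; lra. }
  eapply Rle_lt_trans; [apply Cmod_2Rmax|].
  assert (Rmax (Rabs (fst (Csum (S n) a - l)%C)) (Rabs (snd (Csum (S n) a - l)%C)) < eps / 2)
    by (apply Rmax_lub_lt; assumption).
  pose proof (sqrt_pos 2). nra.
Qed.

Lemma cvC_unique u l1 l2 : cvC u l1 -> cvC u l2 -> l1 = l2.
Proof.
  intros H1 H2.
  assert (forall eps, 0 < eps -> Cmod (Cminus l1 l2) < eps).
  { intros eps He. destruct (H1 (eps/2) ltac:(lra)) as [N1 HN1].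
    destruct (H2 (eps/2) ltac:(lra)) as [N2 HN2].
    specialize (HN1 (N1 + N2)%nat ltac:(lia)). specialize (HN2 (N1 + N2)%nat ltac:(lia)).
    replace (Cminus l1 l2) with (Cplus (Copp (Cminus (u (N1 + N2)%nat) l1)) (Cminus (u (N1 + N2)%nat) l2)) by ring.
    eapply Rle_lt_trans; [apply Cmod_triangle|]. rewrite Cmod_opp. lra. }
  assert (Cmod (Cminus l1 l2) = 0).
  { destruct (Req_dec (Cmod (Cminus l1 l2)) 0) as [E|E]; [exact E|].
    pose proof (Cmod_ge_0 (Cminus l1 l2)).
    specialize (H (Cmod (Cminus l1 l2)) ltac:(lra)). lra. }
  apply Cmod_eq_0 in H0.
  replace l1 with (Cplus (Cminus l1 l2) l2) by ring. rewrite H0. ring.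
Qed.

Lemma Csum_bound n u B : (forall i, (i < n)%nat -> Cmod (u i) <= B) -> Cmod (Csum n u) <= INR n * B.
Proof.
  induction n; intros H; simpl Csum.
  - rewrite Cmod_0. simpl; lra.
  - eapply Rle_trans; [apply Cmod_triangle|]. rewrite S_INR.
    specialize (IHn (fun i Hi => H i ltac:(lia))). specialize (H n ltac:(lia)). lra.
Qed.

Lemma Csum_triangle (T : nat -> nat -> C) N :
  Csum N (fun n => Csum (S n) (fun i => T i (n - i)%nat)) = Csum N (fun r => Csum (N - r) (T r)).
Proof.
  induction N.
  - reflexivity.
  - rewrite Csum_S, IHN.
    rewrite (Csum_ext_lt (S N) (fun r => Csum (S N - r) (T r))
       (fun r => Cplus (Csum (N - r) (T r)) (T r (N - r)%nat))).
    2:{ intros i Hi. replace (S N - i)%nat with (S (N - i)) by lia. reflexivity. }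
    rewrite Csum_plus, (Csum_S N (fun i => Csum (N - i) (T i))).
    replace (N - N)%nat with 0%nat by lia. simpl (Csum 0 _).
    ring.
Qed.

Lemma Csum_sq_tri (T : nat -> nat -> C) M :
  Cminus (Csum M (fun r => Csum M (T r))) (Csum M (fun n => Csum (S n) (fun i => T i (n - i)%nat)))
  = Csum M (fun r => Csum r (fun j => T r (M - r + j)%nat)).
Proof.
  rewrite Csum_triangle, <- Csum_minus. apply Csum_ext_lt. intros r Hr.
  replace M with ((M - r) + r)%nat at 1 by lia. rewrite Csum_split. ring.
Qed.

Lemma exp_neg_pow n : exp (- INR n) = (exp (-1)) ^ n.
Proof.
  induction n.
  - simpl. rewrite Ropp_0. apply exp_0.
  - rewrite S_INR. simpl. rewrite <- IHn, <- exp_plus. f_equal. ring.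
Qed.

Lemma le_exp x : 0 <= x -> x <= exp x.
Proof. intros. pose proof (exp_ineq1_le x). lra. Qed.

Lemma exp_small eps : 0 < eps -> exists N, forall n, (N <= n)%nat -> exp (- INR n) < eps.
Proof.
  intros He. destruct (INR_archimed 1 (- ln eps) ltac:(lra)) as [N HN].
  exists N. intros n Hn. apply le_INR in Hn.
  rewrite <- (exp_ln eps He). apply exp_increasing. lra.
Qed.

Lemma sq_conv (T : nat -> nat -> C) (N0 : nat)
  (HB : forall r s, (N0 <= r + s)%nat -> Cmod (T r s) <= exp (-3 * INR (r + s))) :
  exists l, is_series (fun n => Csum (S n) (fun i => T i (n - i)%nat)) l /\
            cvC (fun M => Csum M (fun r => Csum M (T r))) l.
Proof.
  set (D := fun n => Csum (S n) (fun i => T i (n - i)%nat)).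
  assert (HD : forall n, (N0 <= n)%nat -> Cmod (D n) <= exp (- INR n)).
  { intros n Hn. unfold D. eapply Rle_trans.
    - apply (Csum_bound _ _ (exp (-3 * INR n))). intros i Hi.
      replace n with (i + (n - i))%nat at 2 by lia. apply HB. lia.
    - rewrite S_INR. pose proof (le_exp (INR n) (pos_INR n)).
      pose proof (exp_ineq1_le (INR n)).
      assert (exp (INR n) * exp (-3 * INR n) <= exp (- INR n)).
      { rewrite <- exp_plus. 
        destruct (Req_dec (INR n + -3 * INR n) (- INR n)) as [E|E].
        - rewrite E; lra.
        - apply Rlt_le, exp_increasing. pose proof (pos_INR n). lra. }
      pose proof (exp_pos (-3 * INR n)). nra. }
  assert (Hex : ex_series D).
  { apply (ex_series_incr_n D N0).
    apply (@ex_series_le C_AbsRing C_CompleteNormedModule _ (fun k => exp (-1) ^ k)).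
    - intros k. change (norm (D (N0 + k)%nat)) with (Cmod (D (N0 + k)%nat)).
      eapply Rle_trans; [apply HD; lia|]. rewrite <- exp_neg_pow.
      destruct (Nat.eq_dec N0 0) as [->|Hn].
      + simpl. lra.
      + apply Rlt_le, exp_increasing. rewrite plus_INR. assert (0 < INR N0) by (apply lt_0_INR; lia). lra.
    - apply ex_series_geom. rewrite Rabs_pos_eq by (apply Rlt_le, exp_pos).
      rewrite <- exp_0. apply exp_increasing. lra. }
  destruct Hex as [l Hl]. exists l. split; [exact Hl|].
  intros eps He.
  destruct (is_series_cvC D l Hl (eps / 2) ltac:(lra)) as [N1 HN1].
  destruct (exp_small (eps / 2) ltac:(lra)) as [N2 HN2].
  exists (N0 + N1 + N2)%nat. intros M HM.
  specialize (HN1 M ltac:(lia)). specialize (HN2 M ltac:(lia)).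
  replace (Cminus (Csum M (fun r => Csum M (T r))) l)
    with (Cplus (Cminus (Csum M (fun r => Csum M (T r))) (Csum M D)) (Cminus (Csum M D) l)) by ring.
  eapply Rle_lt_trans; [apply Cmod_triangle|].
  unfold D at 1. rewrite Csum_sq_tri.
  assert (Cmod (Csum M (fun r => Csum r (fun j => T r (M - r + j)%nat))) <= INR M * (INR M * exp (-3 * INR M))).
  { apply Csum_bound. intros r Hr.
    eapply Rle_trans; [apply (Csum_bound _ _ (exp (-3 * INR M)))|].
    - intros j Hj. eapply Rle_trans; [apply HB; lia|].
      destruct (Nat.eq_dec j 0) as [->|Hj0].
      + replace (r + (M - r + 0))%nat with M by lia. lra.
      + apply Rlt_le, exp_increasing. replace (r + (M - r + j))%nat with (M + j)%nat by lia.
        rewrite plus_INR. assert (0 < INR j) by (apply lt_0_INR; lia). lra.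
    - apply Rmult_le_compat_r; [apply Rlt_le, exp_pos|]. apply le_INR. lia. }
  assert (INR M * (INR M * exp (-3 * INR M)) <= exp (- INR M)).
  { pose proof (le_exp (INR M) (pos_INR M)). pose proof (pos_INR M).
    assert (exp (INR M) * (exp (INR M) * exp (-3 * INR M)) = exp (- INR M)).
    { rewrite <- !exp_plus. f_equal. ring. }
    pose proof (exp_pos (-3 * INR M)). pose proof (exp_pos (INR M)).
    assert (INR M * exp (-3 * INR M) <= exp (INR M) * exp (-3 * INR M)) by nra.
    nra. }
  lra.
Qed.

Lemma hecke_f_of_cv a b c x y tau L :
  cvC (hecke_partial a b c x y tau) L -> hecke_f a b c x y tau = L.
Proof.
  intros H. unfold hecke_f.
  assert (E1 : Lim_seq (fun N => Re (hecke_partial a b c x y tau N)) = Finite (Re L)).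
  { apply is_lim_seq_unique. apply is_lim_seq_Reals. intros eps He.
    destruct (H eps He) as [N HN]. exists N. intros n Hn. unfold R_dist.
    specialize (HN n ltac:(lia)). eapply Rle_lt_trans; [|exact HN].
    replace (Re (hecke_partial a b c x y tau n) - Re L) with (Re (Cminus (hecke_partial a b c x y tau n) L))
      by (unfold Re, Cminus, Cplus, Copp; simpl; ring).
    apply re_le_Cmod. }
  assert (E2 : Lim_seq (fun N => Im (hecke_partial a b c x y tau N)) = Finite (Im L)).
  { apply is_lim_seq_unique. apply is_lim_seq_Reals. intros eps He.
    destruct (H eps He) as [N HN]. exists N. intros n Hn. unfold R_dist.
    specialize (HN n ltac:(lia)). eapply Rle_lt_trans; [|exact HN].
    replace (Im (hecke_partial a b c x y tau n) - Im L) with (Im (Cminus (hecke_partial a b c x y tau n) L))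
      by (unfold Im, Cminus, Cplus, Copp; simpl; ring).
    eapply Rle_trans; [apply Rmax_r | apply Rmax_Cmod]. }
  rewrite E1, E2. simpl. destruct L; reflexivity.
Qed.

Lemma cvC_minus u v l1 l2 : cvC u l1 -> cvC v l2 -> cvC (fun n => Cminus (u n) (v n)) (Cminus l1 l2).
Proof.
  intros H1 H2 eps He.
  destruct (H1 (eps/2) ltac:(lra)) as [N1 HN1]. destruct (H2 (eps/2) ltac:(lra)) as [N2 HN2].
  exists (N1 + N2)%nat. intros n Hn.
  specialize (HN1 n ltac:(lia)). specialize (HN2 n ltac:(lia)).
  replace (Cminus (Cminus (u n) (v n)) (Cminus l1 l2)) with (Cplus (Cminus (u n) l1) (Copp (Cminus (v n) l2))) by ring.
  eapply Rle_lt_trans; [apply Cmod_triangle|]. rewrite Cmod_opp. lra.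
Qed.

Lemma int_sq z : 0 <= IZR z * (IZR z - 1).
Proof.
  destruct (Z.le_gt_cases z 0) as [H|H].
  - apply IZR_le in H. nra.
  - assert (1 <= IZR z) by (apply IZR_le; lia). nra.
Qed.

Lemma X_lower a b c al be r s : (1 <= a)%Z -> (1 <= b)%Z -> (1 <= c)%Z -> (0 <= r * s)%Z ->
  al * IZR r + be * IZR s + IZR (a * (r * (r - 1) / 2) + b * r * s + c * (s * (s - 1) / 2))
  >= (Rabs (IZR r) + Rabs (IZR s)) * (Rabs (IZR r) + Rabs (IZR s)) / 2
     - (Rabs al + Rabs be + 1) * (Rabs (IZR r) + Rabs (IZR s)).
Proof.
  intros Ha Hb Hc Hrs.
  rewrite !plus_IZR, !mult_IZR, !half_IZR.
  apply IZR_le in Ha, Hb, Hc, Hrs. rewrite mult_IZR in Hrs.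
  set (R := IZR r) in *. set (S := IZR s) in *.
  pose proof (int_sq r) as hR. pose proof (int_sq s) as hS. fold R S in hR, hS.
  assert (h1 : 0 <= (IZR a - 1) * (R * (R - 1))) by (apply Rmult_le_pos; lra).
  assert (h2 : 0 <= (IZR b - 1) * (R * S)) by (apply Rmult_le_pos; lra).
  assert (h3 : 0 <= (IZR c - 1) * (S * (S - 1))) by (apply Rmult_le_pos; lra).
  assert (h4 : - (Rabs al * Rabs R) <= al * R).
  { rewrite <- Rabs_mult. pose proof (Rle_abs (- (al * R))). rewrite Rabs_Ropp in H. lra. }
  assert (h5 : - (Rabs be * Rabs S) <= be * S).
  { rewrite <- Rabs_mult. pose proof (Rle_abs (- (be * S))). rewrite Rabs_Ropp in H. lra. }
  assert (h6 : Rabs R * Rabs S = R * S).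
  { rewrite <- Rabs_mult. apply Rabs_pos_eq. lra. }
  assert (h7 : Rabs R * Rabs R = R * R).
  { rewrite <- Rabs_mult. apply Rabs_pos_eq. nra. }
  assert (h8 : Rabs S * Rabs S = S * S).
  { rewrite <- Rabs_mult. apply Rabs_pos_eq. nra. }
  pose proof (Rle_abs R). pose proof (Rle_abs S).
  pose proof (Rabs_pos R). pose proof (Rabs_pos S). pose proof (Rabs_pos al). pose proof (Rabs_pos be).
  assert (h9 : Rabs al * Rabs R <= Rabs al * (Rabs R + Rabs S)) by nra.
  assert (h10 : Rabs be * Rabs S <= Rabs be * (Rabs R + Rabs S)) by nra.
  nra.
Qed.

Lemma term_bound a b c w al be tau r s :
  (1 <= a)%Z -> (1 <= b)%Z -> (1 <= c)%Z -> 0 < Im tau -> Cmod w = 1 -> Cmult w w = RtoC 1 ->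
  (0 <= r * s)%Z ->
  2 * (Rabs al + Rabs be + 1) + 6 / (2 * PI * Im tau) <= Rabs (IZR r) + Rabs (IZR s) ->
  Cmod (hecke_term a b c (Cmult w (qpow tau al)) (qpow tau be) tau r s)
    <= exp (-3 * (Rabs (IZR r) + Rabs (IZR s))).
Proof.
  intros Ha Hb Hc Ht Hw1 Hw2 Hrs HM.
  rewrite term_form by exact Hw2.
  rewrite !Cmod_mult, Cmod_qpow, Cmod_sg, Cmod_sg by (try exact Hw1; rewrite Cmod_R, Rabs_left by lra; ring).
  pose proof (X_lower a b c al be r s Ha Hb Hc Hrs) as HX.
  set (X := al * IZR r + be * IZR s + IZR (a * (r * (r - 1) / 2) + b * r * s + c * (s * (s - 1) / 2))) in *.
  set (m := Rabs (IZR r) + Rabs (IZR s)) in *.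
  set (Cc := Rabs al + Rabs be + 1) in *.
  set (lam := 2 * PI * Im tau).
  assert (Hl : 0 < lam) by (unfold lam; pose proof PI_RGT_0; nra).
  assert (H3 : 3 <= lam * (m / 2 - Cc)).
  { assert (3 / lam <= m / 2 - Cc) by (unfold lam in *; lra).
    apply Rmult_le_compat_l with (r := lam) in H; [|lra].
    replace (lam * (3 / lam)) with 3 in H by (field; lra). exact H. }
  assert (Hm : 0 <= m) by (unfold m; pose proof (Rabs_pos (IZR r)); pose proof (Rabs_pos (IZR s)); lra).
  assert (HX2 : 3 * m <= lam * X) by nra.
  replace (-2 * PI * X * Im tau) with (- (lam * X)) by (unfold lam; ring).
  rewrite !Rmult_1_l.
  destruct (Req_dec (- (lam * X)) (-3 * m)) as [E|E].
  - rewrite E; lra.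
  - apply Rlt_le, exp_increasing. lra.
Qed.

Lemma hecke_series a b c x y tau w al be :
  (1 <= a)%Z -> (1 <= b)%Z -> (1 <= c)%Z -> 0 < Im tau -> Cmod w = 1 -> Cmult w w = RtoC 1 ->
  x = Cmult w (qpow tau al) -> y = qpow tau be ->
  exists lp ln : C, is_series (Dp (hecke_term a b c x y tau)) lp /\
    is_series (Dn (hecke_term a b c x y tau)) ln /\ hecke_f a b c x y tau = Cminus lp ln.
Proof.
  intros Ha Hb Hc Ht Hw1 Hw2 -> ->.
  set (M0 := 2 * (Rabs al + Rabs be + 1) + 6 / (2 * PI * Im tau)).
  destruct (INR_archimed 1 M0 ltac:(lra)) as [N0 HN0]. rewrite Rmult_1_r in HN0.
  set (t := hecke_term a b c (Cmult w (qpow tau al)) (qpow tau be) tau).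
  destruct (sq_conv (fun r s => t (Z.of_nat r) (Z.of_nat s)) N0) as [lp [Hp Cp]].
  { intros r s Hrs. unfold t.
    assert (E : Rabs (IZR (Z.of_nat r)) + Rabs (IZR (Z.of_nat s)) = INR (r + s)).
    { rewrite <- !INR_IZR_INZ, !Rabs_pos_eq by apply pos_INR. rewrite plus_INR. reflexivity. }
    rewrite <- E. apply term_bound; auto; try lia.
    rewrite E. apply le_INR in Hrs. fold M0. lra. }
  destruct (sq_conv (fun r s => t (- Z.of_nat (S r))%Z (- Z.of_nat (S s))%Z) N0) as [ln [Hn Cn]].
  { intros r s Hrs. unfold t.
    assert (E : Rabs (IZR (- Z.of_nat (S r))) + Rabs (IZR (- Z.of_nat (S s))) = INR (r + s) + 2).
    { rewrite !opp_IZR, !Rabs_Ropp, <- !INR_IZR_INZ, !Rabs_pos_eq by apply pos_INR.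
      rewrite plus_INR, !S_INR. ring. }
    eapply Rle_trans.
    - apply term_bound; auto; try lia.
      rewrite E. apply le_INR in Hrs. fold M0. lra.
    - rewrite E. destruct (Req_dec 0 1) as [|_]; [lra|].
      apply Rlt_le, exp_increasing. lra. }
  exists lp, ln. split; [exact Hp|]. split; [exact Hn|].
  apply hecke_f_of_cv. exact (cvC_minus _ _ _ _ Cp Cn).
Qed.

Lemma isC_plus (a b : nat -> C) la lb : is_series a la -> is_series b lb ->
  is_series (fun n => Cplus (a n) (b n)) (Cplus la lb).
Proof. intros. apply (is_series_plus a b); auto. Qed.

Lemma isC_scal (a : nat -> C) c la : is_series a la -> is_series (fun n => Cmult c (a n)) (Cmult c la).
Proof. intros. apply (@is_series_scal C_AbsRing C_NormedModule c a la); auto. Qed.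

Lemma isC_ext (a b : nat -> C) l : (forall n, a n = b n) -> is_series a l -> is_series b l.
Proof. intros. apply (is_series_ext a b); auto. Qed.

Lemma isC_unique (a : nat -> C) l1 l2 : is_series a l1 -> is_series a l2 -> l1 = l2.
Proof. intros H1 H2. apply (cvC_unique (fun n => Csum n a)); apply is_series_cvC; assumption. Qed.

Lemma isC_shiftR (a : nat -> C) l : is_series a l ->
  is_series (fun n => match n with O => RtoC 0 | S m => a m end) l.
Proof.
  intros H. apply (is_series_decr_1 (fun n => match n with O => RtoC 0 | S m => a m end)).
  match goal with |- is_series _ ?L => replace L with l; [exact H|] end.
  change (l = Cplus l (Copp (RtoC 0))). apply C_ext; simpl; ring.
Qed.

Lemma isC_shiftL (a : nat -> C) l : is_series a l -> is_series (fun n => a (S n)) (Cminus l (a O)).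
Proof.
  intros H. apply (is_series_incr_1 a).
  match goal with |- is_series _ ?L => replace L with l; [exact H|] end.
  change (l = Cplus (Cminus l (a O)) (a O)). apply C_ext; simpl; ring.
Qed.

Theorem proposition5p1 (K : nat) (d e : Z) (tau : C) (pm : bool) :
  (0 < K)%nat -> 0 < Im tau ->
  let k := Z.of_nat K in
  let kr := INR K in
  Cplus (hecke_f 1 (2 * k + 1) 1 (qpow tau (IZR d)) (qpow tau (IZR e)) tau)
        (Cmult (Cmult (sgnC pm) (qpow tau ((kr + IZR d + IZR e) / 2)))
               (hecke_f 1 (2 * k + 1) 1 (qpow tau (1 + kr + IZR d))
                                        (qpow tau (1 + kr + IZR e)) tau))
  =
  Cminus (hecke_f (k + 1) (k + 1) 1
            (Cmult (Copp (sgnC pm)) (qpow tau ((kr + IZR d + IZR e) / 2)))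
            (qpow tau (IZR d)) tau)
         (Cmult (Cmult (sgnC pm) (qpow tau ((kr + 2 - IZR d - IZR e) / 2)))
                (hecke_f (k + 1) (k + 1) 1
                   (Cmult (Copp (sgnC pm)) (qpow tau (2 + (3 * kr - IZR d - IZR e) / 2)))
                   (qpow tau (kr + 2 - IZR e)) tau)).
Proof.
  intros HK Ht k kr.
  set (t1 := hecke_term 1 (2 * k + 1) 1 (qpow tau (IZR d)) (qpow tau (IZR e)) tau).
  set (t2 := hecke_term 1 (2 * k + 1) 1 (qpow tau (1 + kr + IZR d)) (qpow tau (1 + kr + IZR e)) tau).
  set (t3 := hecke_term (k + 1) (k + 1) 1
            (Cmult (Copp (sgnC pm)) (qpow tau ((kr + IZR d + IZR e) / 2))) (qpow tau (IZR d)) tau).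
  set (t4 := hecke_term (k + 1) (k + 1) 1
            (Cmult (Copp (sgnC pm)) (qpow tau (2 + (3 * kr - IZR d - IZR e) / 2)))
            (qpow tau (kr + 2 - IZR e)) tau).
  set (c1 := Cmult (sgnC pm) (qpow tau ((kr + IZR d + IZR e) / 2))).
  set (c2 := Cmult (sgnC pm) (qpow tau ((kr + 2 - IZR d - IZR e) / 2))).
  assert (Hk : (0 <= k)%Z) by (unfold k; lia).
  destruct (hecke_series 1 (2 * k + 1) 1 (qpow tau (IZR d)) (qpow tau (IZR e)) tau (RtoC 1) (IZR d) (IZR e))
    as [lp1 [ln1 [Hp1 [Hn1 E1]]]]; try lia; auto; [apply Cmod_1 | apply one_sq | symmetry; apply Cmult_1_l |].
  destruct (hecke_series 1 (2 * k + 1) 1 (qpow tau (1 + kr + IZR d)) (qpow tau (1 + kr + IZR e)) tau (RtoC 1)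
     (1 + kr + IZR d) (1 + kr + IZR e))
    as [lp2 [ln2 [Hp2 [Hn2 E2]]]]; try lia; auto; [apply Cmod_1 | apply one_sq | symmetry; apply Cmult_1_l |].
  destruct (hecke_series (k + 1) (k + 1) 1
            (Cmult (Copp (sgnC pm)) (qpow tau ((kr + IZR d + IZR e) / 2))) (qpow tau (IZR d)) tau
            (sgm pm) ((kr + IZR d + IZR e) / 2) (IZR d))
    as [lp3 [ln3 [Hp3 [Hn3 E3]]]]; try lia; auto; [apply sig_mod | apply sig_sq |].
  destruct (hecke_series (k + 1) (k + 1) 1
            (Cmult (Copp (sgnC pm)) (qpow tau (2 + (3 * kr - IZR d - IZR e) / 2)))
            (qpow tau (kr + 2 - IZR e)) tau
            (sgm pm) (2 + (3 * kr - IZR d - IZR e) / 2) (kr + 2 - IZR e))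
    as [lp4 [ln4 [Hp4 [Hn4 E4]]]]; try lia; auto; [apply sig_mod | apply sig_sq |].
  fold t1 t2 t3 t4 in Hp1, Hn1, Hp2, Hn2, Hp3, Hn3, Hp4, Hn4.
  fold t1 t2 t3 t4 c1 c2. rewrite E1, E2, E3, E4.
  assert (PA : Cminus (Cplus lp1 (Cmult c1 lp2)) (Cmult c2 ln4) = lp3).
  { assert (Hs : is_series (Dp t3) (Cplus (Cplus lp1 (Cmult c1 lp2)) (Cmult c2 (Cmult (RtoC (-1)) ln4)))).
    { eapply isC_ext; [|apply isC_plus; [apply isC_plus; [exact Hp1| apply isC_scal; apply isC_shiftR; exact Hp2]
                                      | apply isC_scal; apply isC_shiftR; apply isC_scal; exact Hn4]].
      intros [|n]; cbv beta iota.
      - pose proof (ShellP0 tau pm K d e) as S0. fold k kr t1 t3 in S0. rewrite <- S0. ring.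
      - pose proof (ShellP tau pm K d e n) as S1. fold k kr t1 t2 t3 t4 c1 c2 in S1.
        transitivity (Cminus (Cplus (Dp t1 (S n)) (Cmult c1 (Dp t2 n))) (Cmult c2 (Dn t4 n))); [ring|].
        rewrite S1. ring. }
    pose proof (isC_unique _ _ _ Hs Hp3) as HE.
    rewrite <- HE. ring. }
  assert (NA : Cminus (Cplus ln1 (Cmult c1 ln2)) (Cmult c2 lp4) = ln3).
  { pose proof (ShellN0 tau pm K d e) as S0. fold k kr t2 t4 c1 c2 in S0.
    assert (Hs : is_series (Dn t3) (Cplus (Cplus ln1 (Cmult c1 (Cminus ln2 (Dn t2 0))))
                                           (Cmult c2 (Cmult (RtoC (-1)) (Cminus lp4 (Dp t4 0)))))).
    { eapply isC_ext; [|apply isC_plus; [apply isC_plus; [exact Hn1| apply isC_scal; apply isC_shiftL; exact Hn2]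
                                      | apply isC_scal; apply isC_scal; apply isC_shiftL; exact Hp4]].
      intros n. pose proof (ShellN tau pm K d e n) as S1. fold k kr t1 t2 t3 t4 c1 c2 in S1.
      cbv beta.
      transitivity (Cminus (Cplus (Dn t1 n) (Cmult c1 (Dn t2 (S n)))) (Cmult c2 (Dp t4 (S n)))); [ring|].
      rewrite S1. ring. }
    pose proof (isC_unique _ _ _ Hs Hn3) as HE.
    rewrite <- HE. transitivity (Cplus (Cminus (Cplus ln1 (Cmult c1 ln2)) (Cmult c2 lp4))
       (Cminus (Cmult c2 (Dp t4 0)) (Cmult c1 (Dn t2 0)))); [rewrite S0; ring | ring]. }
  rewrite <- PA, <- NA. ring.
Qed.
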